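(* Let a lattice $\Lambda\subset\mathbb R^3$ have Voronoi type $V_1$, i.e. its Voronoi domain is a truncated octahedron. Then: (a) up to reordering of vectors, $\Lambda$ has exactly two obtuse superbases, and they are related by the central symmetry $v\mapsto -v$: if $(v_0,v_1,v_2,v_3)$ is an obtuse superbase, the only obtuse superbases are reorderings of $\{v_0,v_1,v_2,v_3\}$ and of $\{-v_0,-v_1,-v_2,-v_3\}$; (b) the coforms of all (ordered) obtuse superbases of $\Lambda$ are related by the 24 index-permutations, i.e. for any two obtuse superbases $B,B'$ there is $\sigma\in S_4$ with $p'_{ij}=p_{\sigma(i)\sigma(j)}$ for all $i\ne j$.
   Context: A lattice $\Lambda\subset\mathbb R^3$ is the set of integer combinations of a basis $v_1,v_2,v_3$. A superbase is $(v_0,v_1,v_2,v_3)$ with $v_1,v_2,v_3$ a basis of $\Lambda$ and $v_0=-v_1-v_2-v_3$; its conorms are $p_{ij}=-v_i\cdot v_j$ for distinct $i,j\in\{0,1,2,3\}$ ($p_{ij}=p_{ji}$), and it is obtuse if all $p_{ij}\ge 0$. The coform is the matrix $\begin{pmatrix}p_{23}&p_{13}&p_{12}\\ p_{01}&p_{02}&p_{03}\end{pmatrix}$. An index-permutation $\sigma\in S_4$ maps conorms by $p_{ij}\mapsto p_{\sigma(i)\sigma(j)}$. The Voronoi domain of $\Lambda$ is $V(\Lambda)=\{p\in\mathbb R^3: |p|\le |p-v| \text{ for all } v\in\Lambda\}$. *)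

(* Defs.v *)
From Stdlib Require Import Reals ZArith List.
From mathcomp Require Import all_boot fingroup perm.
Set Implicit Arguments. Unset Strict Implicit. Unset Printing Implicit Defensive.

Open Scope R_scope.

Record V3 := mkV { vx : R; vy : R; vz : R }.

Definition vadd (u v : V3) : V3 := mkV (vx u + vx v) (vy u + vy v) (vz u + vz v).
Definition vopp (u : V3) : V3 := mkV (- vx u) (- vy u) (- vz u).
Definition vsub (u v : V3) : V3 := vadd u (vopp v).
Definition vscale (a : R) (u : V3) : V3 := mkV (a * vx u) (a * vy u) (a * vz u).
Definition vzero : V3 := mkV 0 0 0.
Definition dot (u v : V3) : R := vx u * vx v + vy u * vy v + vz u * vz v.
Definition cross (u v : V3) : V3 :=
  mkV (vy u * vz v - vz u * vy v) (vz u * vx v - vx u * vz v) (vx u * vy v - vy u * vx v).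
Definition det3 (u v w : V3) : R := dot u (cross v w).

Definition in_lattice (b1 b2 b3 : V3) (v : V3) : Prop :=
  exists a1 a2 a3 : Z,
    v = vadd (vscale (IZR a1) b1) (vadd (vscale (IZR a2) b2) (vscale (IZR a3) b3)).

Definition i0 : 'I_4 := @Ordinal 4 0 isT.
Definition i1 : 'I_4 := @Ordinal 4 1 isT.
Definition i2 : 'I_4 := @Ordinal 4 2 isT.
Definition i3 : 'I_4 := @Ordinal 4 3 isT.

(* v : 'I_4 -> V3 is a superbase of the lattice with basis b1 b2 b3:
   v1, v2, v3 is a basis of the lattice (it generates exactly the lattice;
   since the lattice has rank 3 this forces linear independence) and
   v0 = - v1 - v2 - v3. *)
Definition superbase (b1 b2 b3 : V3) (v : 'I_4 -> V3) : Prop :=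
  (forall w, in_lattice b1 b2 b3 w <-> in_lattice (v i1) (v i2) (v i3) w) /\
  v i0 = vopp (vadd (v i1) (vadd (v i2) (v i3))).

Definition conorm (v : 'I_4 -> V3) (i j : 'I_4) : R := - dot (v i) (v j).

Definition obtuse (v : 'I_4 -> V3) : Prop :=
  forall i j : 'I_4, i != j -> 0 <= conorm v i j.

Definition obtuse_superbase (b1 b2 b3 : V3) (v : 'I_4 -> V3) : Prop :=
  superbase b1 b2 b3 v /\ obtuse v.

Definition voronoi (b1 b2 b3 : V3) (p : V3) : Prop :=
  forall w, in_lattice b1 b2 b3 w -> dot p p <= dot (vsub p w) (vsub p w).

(* w is a facet vector: w is a nonzero lattice vector and the face
   V(Lambda) ∩ {p : |p| = |p - w|} is 2-dimensional (contains three
   non-collinear points).  Facets of V(Lambda) are in bijection with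
   facet vectors. *)
Definition facet_vector (b1 b2 b3 : V3) (w : V3) : Prop :=
  in_lattice b1 b2 b3 w /\ w <> vzero /\
  exists p q r : V3,
    voronoi b1 b2 b3 p /\ voronoi b1 b2 b3 q /\ voronoi b1 b2 b3 r /\
    dot p p = dot (vsub p w) (vsub p w) /\
    dot q q = dot (vsub q w) (vsub q w) /\
    dot r r = dot (vsub r w) (vsub r w) /\
    cross (vsub q p) (vsub r p) <> vzero.

(* Voronoi type V1: the Voronoi domain is a truncated octahedron, i.e.
   (among the five 3D parallelohedra) it has exactly 14 facets. *)
Definition voronoi_type_V1 (b1 b2 b3 : V3) : Prop :=
  exists s : list V3, NoDup s /\ length s = 14%nat /\
    forall w, facet_vector b1 b2 b3 w <-> In w s.

Definition reordering (v w : 'I_4 -> V3) : Prop :=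
  exists s : {perm 'I_4}, forall i, w i = v (s i).

Definition neg_sb (v : 'I_4 -> V3) : 'I_4 -> V3 := fun i => vopp (v i).

(* Main.v *)
Require Import Defs.
From Stdlib Require Import Reals ZArith List Lra Lia Psatz ClassicalEpsilon Classical Bool.
From mathcomp Require Import all_boot fingroup perm.
Open Scope R_scope.

Lemma V3_ext (u v : V3) : vx u = vx v -> vy u = vy v -> vz u = vz v -> u = v.
Proof. destruct u, v; simpl; intros -> -> ->; reflexivity. Qed.

Ltac vdes := repeat match goal with v : V3 |- _ => destruct v end;
  unfold det3, vsub in *; unfold vadd, vopp, vscale, vzero, dot, cross in *; simpl in *.

Lemma dotDl u v w : dot (vadd u v) w = dot u w + dot v w. Proof. vdes; ring. Qed.
Lemma dotDr u v w : dot w (vadd u v) = dot w u + dot w v. Proof. vdes; ring. Qed.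
Lemma dotNl u w : dot (vopp u) w = - dot u w. Proof. vdes; ring. Qed.
Lemma dotNr u w : dot w (vopp u) = - dot w u. Proof. vdes; ring. Qed.
Lemma dotZl a u w : dot (vscale a u) w = a * dot u w. Proof. vdes; ring. Qed.
Lemma dotZr a u w : dot w (vscale a u) = a * dot w u. Proof. vdes; ring. Qed.
Lemma dotC u w : dot u w = dot w u. Proof. vdes; ring. Qed.
Lemma dot0l w : dot vzero w = 0. Proof. vdes; ring. Qed.

Lemma cs x y : (dot x y)^2 <= dot x x * dot y y.
Proof.
  destruct x as [x1 x2 x3], y as [y1 y2 y3]; unfold dot; cbn [vx vy vz].
  assert (H: (x1 * x1 + x2 * x2 + x3 * x3) * (y1 * y1 + y2 * y2 + y3 * y3) - (x1*y1+x2*y2+x3*y3)^2 = (x2*y3 - x3*y2)^2 + (x3*y1 - x1*y3)^2 + (x1*y2-x2*y1)^2) by ring.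
  assert (0 <= (x2*y3 - x3*y2)^2) by apply pow2_ge_0.
  assert (0 <= (x3*y1 - x1*y3)^2) by apply pow2_ge_0.
  assert (0 <= (x1*y2 - x2*y1)^2) by apply pow2_ge_0.
  lra.
Qed.


Definition comb (b c d : V3) (x y z : R) := vadd (vscale x b) (vadd (vscale y c) (vscale z d)).

Lemma lat_add b c d u v : in_lattice b c d u -> in_lattice b c d v -> in_lattice b c d (vadd u v).
Proof.
  intros [x1 [x2 [x3 ->]]] [y1 [y2 [y3 ->]]].
  exists (x1+y1)%Z, (x2+y2)%Z, (x3+y3)%Z. rewrite !plus_IZR. vdes. apply V3_ext; simpl; ring.
Qed.
Lemma lat_opp b c d u : in_lattice b c d u -> in_lattice b c d (vopp u).
Proof.
  intros [x1 [x2 [x3 ->]]].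
  exists (-x1)%Z, (-x2)%Z, (-x3)%Z. rewrite !opp_IZR. vdes. apply V3_ext; simpl; ring.
Qed.
Lemma lat_scale b c d k u : in_lattice b c d u -> in_lattice b c d (vscale (IZR k) u).
Proof.
  intros [x1 [x2 [x3 ->]]].
  exists (k*x1)%Z, (k*x2)%Z, (k*x3)%Z. rewrite !mult_IZR. vdes. apply V3_ext; simpl; ring.
Qed.
Lemma lat_b b c d : in_lattice b c d b.
Proof. exists 1%Z, 0%Z, 0%Z. vdes. apply V3_ext; simpl; ring. Qed.
Lemma lat_c b c d : in_lattice b c d c.
Proof. exists 0%Z, 1%Z, 0%Z. vdes. apply V3_ext; simpl; ring. Qed.
Lemma lat_d b c d : in_lattice b c d d.
Proof. exists 0%Z, 0%Z, 1%Z. vdes. apply V3_ext; simpl; ring. Qed.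

Lemma lat_sub3 b c d x y z : in_lattice b c d x -> in_lattice b c d y -> in_lattice b c d z ->
  forall w, in_lattice x y z w -> in_lattice b c d w.
Proof.
  intros Hx Hy Hz w [k1 [k2 [k3 ->]]].
  apply lat_add; [apply lat_scale; auto| apply lat_add; apply lat_scale; auto].
Qed.

Definition SB4 (b1 b2 b3 a b c d : V3) : Prop :=
  (forall w, in_lattice b1 b2 b3 w <-> in_lattice b c d w) /\ a = vopp (vadd b (vadd c d)).

Lemma lat_eq b c d x y z : in_lattice b c d x -> in_lattice b c d y -> in_lattice b c d z ->
  in_lattice x y z b -> in_lattice x y z c -> in_lattice x y z d ->
  forall w, in_lattice b c d w <-> in_lattice x y z w.
Proof.
  intros; split; apply lat_sub3; auto.
Qed.

Lemma SB4_sw01 b1 b2 b3 a b c d : SB4 b1 b2 b3 a b c d -> SB4 b1 b2 b3 b a c d.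
Proof.
  intros [HL Ha]. split.
  - intro w. rewrite HL. apply lat_eq.
    + rewrite Ha. apply lat_opp. apply lat_add; [apply lat_b| apply lat_add; [apply lat_c|apply lat_d]].
    + apply lat_c.
    + apply lat_d.
    + assert (b = vopp (vadd a (vadd c d))) as ->.
      { subst a. vdes. apply V3_ext; simpl; ring. }
      apply lat_opp. apply lat_add; [apply lat_b| apply lat_add; [apply lat_c|apply lat_d]].
    + apply lat_c.
    + apply lat_d.
  - subst a. vdes. apply V3_ext; simpl; ring.
Qed.

Lemma SB4_sw12 b1 b2 b3 a b c d : SB4 b1 b2 b3 a b c d -> SB4 b1 b2 b3 a c b d.
Proof.
  intros [HL Ha]. split.
  - intro w. rewrite HL. apply lat_eq; first [apply lat_b|apply lat_c|apply lat_d].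
  - subst a. vdes. apply V3_ext; simpl; ring.
Qed.

Lemma SB4_sw23 b1 b2 b3 a b c d : SB4 b1 b2 b3 a b c d -> SB4 b1 b2 b3 a b d c.
Proof.
  intros [HL Ha]. split.
  - intro w. rewrite HL. apply lat_eq; first [apply lat_b|apply lat_c|apply lat_d].
  - subst a. vdes. apply V3_ext; simpl; ring.
Qed.

Lemma lat_opp_inv b c d u : in_lattice b c d (vopp u) -> in_lattice b c d u.
Proof.
  intro H. apply lat_opp in H. assert (vopp (vopp u) = u) as E by (vdes; apply V3_ext; simpl; ring).
  rewrite E in H. exact H.
Qed.

Lemma SB4_neg b1 b2 b3 a b c d : SB4 b1 b2 b3 a b c d -> SB4 b1 b2 b3 (vopp a) (vopp b) (vopp c) (vopp d).
Proof.
  intros [HL Ha]. split.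
  - intro w. rewrite HL. apply lat_eq.
    + apply lat_opp, lat_b.
    + apply lat_opp, lat_c.
    + apply lat_opp, lat_d.
    + apply lat_opp_inv, lat_b.
    + apply lat_opp_inv, lat_c.
    + apply lat_opp_inv, lat_d.
  - subst a. vdes. apply V3_ext; simpl; ring.
Qed.

Lemma det3_comb b c d x1 y1 z1 x2 y2 z2 x3 y3 z3 :
  det3 (comb b c d x1 y1 z1) (comb b c d x2 y2 z2) (comb b c d x3 y3 z3) =
  (x1*(y2*z3 - z2*y3) - y1*(x2*z3 - z2*x3) + z1*(x2*y3 - y2*x3)) * det3 b c d.
Proof. unfold comb. vdes. ring. Qed.

Lemma SB4_det b1 b2 b3 a b c d : det3 b1 b2 b3 <> 0 -> SB4 b1 b2 b3 a b c d -> det3 b c d <> 0.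
Proof.
  intros Hd [HL _] H0. apply Hd.
  destruct (proj1 (HL b1) (lat_b _ _ _)) as [x1 [y1 [z1 E1]]].
  destruct (proj1 (HL b2) (lat_c _ _ _)) as [x2 [y2 [z2 E2]]].
  destruct (proj1 (HL b3) (lat_d _ _ _)) as [x3 [y3 [z3 E3]]].
  rewrite E1 E2 E3. fold (comb b c d). rewrite det3_comb H0. ring.
Qed.

Lemma indep b c d x y z : det3 b c d <> 0 -> comb b c d x y z = vzero -> x = 0 /\ y = 0 /\ z = 0.
Proof.
  intros Hd E.
  assert (E1 : det3 (comb b c d x y z) c d = x * det3 b c d) by (unfold comb; vdes; ring).
  assert (E2 : det3 b (comb b c d x y z) d = y * det3 b c d) by (unfold comb; vdes; ring).
  assert (E3 : det3 b c (comb b c d x y z) = z * det3 b c d) by (unfold comb; vdes; ring).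
  rewrite E in E1, E2, E3.
  assert (Z1 : forall u v, det3 vzero u v = 0) by (intros; vdes; ring).
  assert (Z2 : forall u v, det3 u vzero v = 0) by (intros; vdes; ring).
  assert (Z3 : forall u v, det3 u v vzero = 0) by (intros; vdes; ring).
  rewrite Z1 in E1. rewrite Z2 in E2. rewrite Z3 in E3.
  repeat split.
  - destruct (Req_dec x 0); auto. exfalso. apply Hd. apply (Rmult_eq_reg_l x); auto. lra.
  - destruct (Req_dec y 0); auto. exfalso. apply Hd. apply (Rmult_eq_reg_l y); auto. lra.
  - destruct (Req_dec z 0); auto. exfalso. apply Hd. apply (Rmult_eq_reg_l z); auto. lra.
Qed.

Ltac indep_tac Hd x y z :=
  let H := fresh in let HA := fresh in
  assert (H := indep _ _ _ x y z Hd); 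
  match type of H with ?A -> _ => assert (HA : A) end;
  [ vdes; apply V3_ext; simpl;
    repeat match goal with E : mkV _ _ _ = mkV _ _ _ |- _ => injection E; clear E; intros end;
    lra
  | destruct (H HA) as [? [? ?]]; lra ].

Lemma SB4_facts b1 b2 b3 a b c d : det3 b1 b2 b3 <> 0 -> SB4 b1 b2 b3 a b c d ->
  a <> vzero /\ b <> vzero /\ c <> vzero /\ d <> vzero /\
  a <> b /\ a <> c /\ a <> d /\ b <> c /\ b <> d /\ c <> d /\
  vadd a b <> vzero /\ vadd a c <> vzero /\ vadd a d <> vzero /\
  vadd b c <> vzero /\ vadd b d <> vzero /\ vadd c d <> vzero.
Proof.
  intros Hd0 HS. assert (Hd := SB4_det _ _ _ _ _ _ _ Hd0 HS). destruct HS as [_ Ha]. subst a.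
  repeat split; intro E.
  - indep_tac Hd 1 1 1.
  - indep_tac Hd 1 0 0.
  - indep_tac Hd 0 1 0.
  - indep_tac Hd 0 0 1.
  - indep_tac Hd 2 1 1.
  - indep_tac Hd 1 2 1.
  - indep_tac Hd 1 1 2.
  - indep_tac Hd 1 (-1) 0.
  - indep_tac Hd 1 0 (-1).
  - indep_tac Hd 0 1 (-1).
  - indep_tac Hd 0 1 1.
  - indep_tac Hd 1 0 1.
  - indep_tac Hd 1 1 0.
  - indep_tac Hd 1 1 0.
  - indep_tac Hd 1 0 1.
  - indep_tac Hd 0 1 1.
Qed.

Lemma vor_ineq b1 b2 b3 z y : voronoi b1 b2 b3 z -> in_lattice b1 b2 b3 y -> 2 * dot z y <= dot y y.
Proof.
  intros Hv Hy. specialize (Hv y Hy). unfold vsub in Hv.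
  rewrite !dotDl !dotDr !dotNl !dotNr (dotC y z) in Hv. lra.
Qed.

Lemma bis_eq z w : dot z z = dot (vsub z w) (vsub z w) -> 2 * dot z w = dot w w.
Proof.
  intros H. unfold vsub in H.
  rewrite !dotDl !dotDr !dotNl !dotNr (dotC w z) in H. lra.
Qed.

Lemma dot_self_eq0 u : dot u u = 0 -> u = vzero.
Proof.
  destruct u as [u1 u2 u3]; unfold dot, vzero; simpl; intro H.
  assert (0 <= u1*u1) by apply Rle_0_sqr.
  assert (0 <= u2*u2) by apply Rle_0_sqr.
  assert (0 <= u3*u3) by apply Rle_0_sqr.
  assert (u1*u1 = 0) by lra. assert (u2*u2 = 0) by lra. assert (u3*u3 = 0) by lra.
  apply V3_ext; simpl; apply Rsqr_0_uniq; unfold Rsqr; auto.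
Qed.

Lemma par_id e f y :
  vsub (vscale (dot (cross e f) (cross e f)) y) (vscale (dot (cross e f) y) (cross e f)) =
  vsub (vscale (dot f y) (cross (cross e f) e)) (vscale (dot e y) (cross (cross e f) f)).
Proof. vdes. apply V3_ext; simpl; ring. Qed.

Lemma par e f y : dot e y = 0 -> dot f y = 0 ->
  vscale (dot (cross e f) (cross e f)) y = vscale (dot (cross e f) y) (cross e f).
Proof.
  intros H1 H2. assert (E := par_id e f y). rewrite H1 H2 in E.
  revert E. generalize (cross e f) as n; intros n E. vdes.
  injection E; intros; apply V3_ext; simpl; lra.
Qed.

Lemma sub_eq0_dot a b y : 2 * dot a y = 2 * dot b y -> dot (vsub a b) y = 0.
Proof. intro H. unfold vsub. rewrite dotDl dotNl. lra. Qed.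

Lemma facet_short b1 b2 b3 w x : facet_vector b1 b2 b3 w -> in_lattice b1 b2 b3 x ->
  dot (vadd w (vscale 2 x)) (vadd w (vscale 2 x)) <= dot w w ->
  vadd w (vscale 2 x) = w \/ vadd w (vscale 2 x) = vopp w.
Proof.
  intros [Hw [Hw0 [p [q [r [Vp [Vq [Vr [Ep [Eq [Er Hn]]]]]]]]]]] Hx Hu.
  apply bis_eq in Ep. apply bis_eq in Eq. apply bis_eq in Er.
  rewrite !dotDl !dotDr !dotZl !dotZr (dotC x w) in Hu.
  assert (key : forall z, voronoi b1 b2 b3 z -> 2 * dot z w = dot w w -> 2 * dot z x = - dot x x).
  { intros z Vz Ez.
    assert (H1 := vor_ineq _ _ _ _ _ Vz (lat_add _ _ _ _ _ Hw Hx)).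
    assert (H2 := vor_ineq _ _ _ _ _ Vz (lat_opp _ _ _ _ Hx)).
    rewrite !dotDl !dotDr (dotC x w) in H1. rewrite !dotNl !dotNr in H2. lra. }
  assert (Kp := key p Vp Ep). assert (Kq := key q Vq Eq). assert (Kr := key r Vr Er).
  assert (O1 : dot (vsub q p) x = 0) by (apply sub_eq0_dot; lra).
  assert (O2 : dot (vsub r p) x = 0) by (apply sub_eq0_dot; lra).
  assert (O3 : dot (vsub q p) w = 0) by (apply sub_eq0_dot; lra).
  assert (O4 : dot (vsub r p) w = 0) by (apply sub_eq0_dot; lra).
  assert (Px := par _ _ _ O1 O2). assert (Pw := par _ _ _ O3 O4).
  revert Hn Px Pw. generalize (cross (vsub q p) (vsub r p)) as n. intros n Hn Px Pw.
  set (N := dot n n) in *. set (sx := dot n x) in *. set (sw := dot n w) in *.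
  assert (HN : N <> 0) by (intro E; apply Hn; apply dot_self_eq0; exact E).
  assert (Hsw : sw <> 0).
  { intro E. rewrite E in Pw. apply Hw0.
    assert (vscale N w = vzero) as E2 by (rewrite Pw; vdes; apply V3_ext; simpl; ring).
    destruct w as [w1 w2 w3]; unfold vscale, vzero in E2; injection E2; intros.
    apply V3_ext; simpl.
    all: apply (Rmult_eq_reg_l N); auto; lra. }
  assert (e1 : N * dot p x = sx * dot p n).
  { rewrite -(dotZr N x p) Px dotZr. reflexivity. }
  assert (e2 : N * dot p w = sw * dot p n).
  { rewrite -(dotZr N w p) Pw dotZr. reflexivity. }
  assert (e3 : N * dot x x = sx * sx).
  { rewrite -(dotZr N x x) Px dotZr (dotC x n). reflexivity. }
  assert (e4 : N * dot w w = sw * sw).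
  { rewrite -(dotZr N w w) Pw dotZr (dotC w n). reflexivity. }
  assert (f1 : 2 * sx * dot p n = - (sx * sx)).
  { assert (N * (2 * dot p x) = N * (- dot x x)) by (rewrite Kp; ring). lra. }
  assert (f2 : 2 * sw * dot p n = sw * sw).
  { assert (N * (2 * dot p w) = N * (dot w w)) by (rewrite Ep; ring). lra. }
  assert (f3 : 2 * dot p n = sw).
  { apply (Rmult_eq_reg_l sw); auto. lra. }
  assert (f4 : sx * (sx + sw) = 0).
  { rewrite -f3. lra. }
  apply Rmult_integral in f4. destruct f4 as [f4|f4].
  - left. rewrite f4 in Px.
    assert (x = vzero).
    { destruct x as [x1 x2 x3]. vdes. injection Px; intros. apply V3_ext; simpl;
      apply (Rmult_eq_reg_l N); auto; lra. }
    subst x. vdes. apply V3_ext; simpl; ring.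
  - right. assert (sx = - sw) as Hsx by lra. rewrite Hsx in Px.
    assert (x = vopp w).
    { destruct x as [x1 x2 x3], w as [w1 w2 w3]. unfold vscale, vopp in *. simpl in *.
      injection Px; injection Pw; intros. apply V3_ext; simpl;
      apply (Rmult_eq_reg_l N); auto; lra. }
    subst x. vdes. apply V3_ext; simpl; ring.
Qed.

Definition O6 (a b c d : V3) : Prop :=
  0 <= - dot a b /\ 0 <= - dot a c /\ 0 <= - dot a d /\
  0 <= - dot b c /\ 0 <= - dot b d /\ 0 <= - dot c d.

Lemma norm_comb a b c d x y z : a = vopp (vadd b (vadd c d)) ->
  dot (comb b c d x y z) (comb b c d x y z) =
  (- dot a b) * (x*x) + (- dot a c) * (y*y) + (- dot a d) * (z*z) +
  (- dot b c) * ((x-y)*(x-y)) + (- dot b d) * ((x-z)*(x-z)) + (- dot c d) * ((y-z)*(y-z)).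
Proof. intros ->. unfold comb. vdes. ring. Qed.

Definition L14 (b c d : V3) : list V3 :=
  [:: b; c; d; vadd b c; vadd b d; vadd c d; vadd b (vadd c d);
      vopp b; vopp c; vopp d; vopp (vadd b c); vopp (vadd b d); vopp (vadd c d);
      vopp (vadd b (vadd c d))].

Lemma parZ (a b : Z) : ((a mod 2 - b mod 2) * (a mod 2 - b mod 2) <= (a - b) * (a - b))%Z.
Proof.
  assert (Ea := Z.div_mod a 2 ltac:(lia)). assert (Eb := Z.div_mod b 2 ltac:(lia)).
  assert (Ba := Z.mod_pos_bound a 2 ltac:(lia)). assert (Bb := Z.mod_pos_bound b 2 ltac:(lia)).
  revert Ea Eb Ba Bb. generalize (a mod 2)%Z (b mod 2)%Z (a / 2)%Z (b / 2)%Z.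
  intros sa sb ka kb Ea Eb Ba Bb. subst a b.
  assert (Sq : forall t : Z, (0 <= t * t)%Z) by (intro t; nia).
  assert (Sq1 : forall t : Z, t <> 0%Z -> (1 <= t * t)%Z) by (intros t Ht; nia).
  assert (sa = 0 \/ sa = 1)%Z as [->| ->] by lia; assert (sb = 0 \/ sb = 1)%Z as [->| ->] by lia;
  match goal with |- (_ <= ?t * ?t)%Z => assert (A0 := Sq t); destruct (Z.eq_dec t 0) as [Ht|Ht]; [ | assert (A1 := Sq1 t Ht)]; nia end.
Qed.

Lemma parR (a b : Z) : (IZR (a mod 2) - IZR (b mod 2)) * (IZR (a mod 2) - IZR (b mod 2))
  <= (IZR a - IZR b) * (IZR a - IZR b).
Proof. rewrite -!minus_IZR -!mult_IZR. apply IZR_le, parZ. Qed.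

Lemma parR0 (a : Z) : IZR (a mod 2) * IZR (a mod 2) <= IZR a * IZR a.
Proof.
  assert (H := parR a 0). rewrite Zmod_0_l in H. rewrite !Rminus_0_r in H. exact H.
Qed.

Lemma vopp_inv u : vopp (vopp u) = u.
Proof. vdes. apply V3_ext; simpl; ring. Qed.

Ltac inL := simpl In;
  repeat (first [ left; vdes; apply V3_ext; simpl; ring | right ]).

Lemma facet_L14 b1 b2 b3 a b c d w : SB4 b1 b2 b3 a b c d -> O6 a b c d ->
  facet_vector b1 b2 b3 w -> In w (L14 b c d).
Proof.
  intros [HL Ha] HO Hf.
  assert (Hf' := Hf). destruct Hf' as [Hw [Hw0 _]].
  destruct (proj1 (HL w) Hw) as [al [be [ga Ew]]]. fold (comb b c d) in Ew.
  set (x := comb b c d (IZR (- (al / 2))) (IZR (- (be / 2))) (IZR (- (ga / 2)))).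
  assert (Hx : in_lattice b1 b2 b3 x) by (apply HL; exists (- (al / 2))%Z, (- (be / 2))%Z, (- (ga / 2))%Z; reflexivity).
  assert (Hu : vadd w (vscale 2 x) = comb b c d (IZR (al mod 2)) (IZR (be mod 2)) (IZR (ga mod 2))).
  { assert (E1 := Z.div_mod al 2 ltac:(lia)). assert (E2 := Z.div_mod be 2 ltac:(lia)).
    assert (E3 := Z.div_mod ga 2 ltac:(lia)).
    rewrite Ew. unfold x. rewrite {1}E1 {1}E2 {1}E3.
    rewrite !plus_IZR !mult_IZR !opp_IZR. unfold comb. vdes. apply V3_ext; simpl; ring. }
  assert (Hle : dot (vadd w (vscale 2 x)) (vadd w (vscale 2 x)) <= dot w w).
  { rewrite Hu Ew !(norm_comb a b c d _ _ _ Ha).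
    destruct HO as [H1 [H2 [H3 [H4 [H5 H6]]]]].
    assert (Q1 := Rmult_le_compat_l _ _ _ H1 (parR0 al)).
    assert (Q2 := Rmult_le_compat_l _ _ _ H2 (parR0 be)).
    assert (Q3 := Rmult_le_compat_l _ _ _ H3 (parR0 ga)).
    assert (Q4 := Rmult_le_compat_l _ _ _ H4 (parR al be)).
    assert (Q5 := Rmult_le_compat_l _ _ _ H5 (parR al ga)).
    assert (Q6 := Rmult_le_compat_l _ _ _ H6 (parR be ga)).
    lra. }
  destruct (facet_short _ _ _ _ _ Hf Hx Hle) as [E|E]; rewrite Hu in E.
  - rewrite -E.
    assert (Ba := Z.mod_pos_bound al 2 ltac:(lia)). assert (Bb := Z.mod_pos_bound be 2 ltac:(lia)).
    assert (Bc := Z.mod_pos_bound ga 2 ltac:(lia)).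
    revert E Ba Bb Bc. generalize (al mod 2)%Z (be mod 2)%Z (ga mod 2)%Z. intros s1 s2 s3 E Ba Bb Bc.
    assert (s1 = 0 \/ s1 = 1)%Z as [->| ->] by lia; assert (s2 = 0 \/ s2 = 1)%Z as [->| ->] by lia;
    assert (s3 = 0 \/ s3 = 1)%Z as [->| ->] by lia; unfold comb;
    try (exfalso; apply Hw0; rewrite -E; vdes; apply V3_ext; simpl; ring);
    inL.
  - assert (E' : w = vopp (comb b c d (IZR (al mod 2)) (IZR (be mod 2)) (IZR (ga mod 2)))) by (rewrite E vopp_inv; reflexivity).
    rewrite E'.
    assert (Ba := Z.mod_pos_bound al 2 ltac:(lia)). assert (Bb := Z.mod_pos_bound be 2 ltac:(lia)).
    assert (Bc := Z.mod_pos_bound ga 2 ltac:(lia)).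
    revert E' Ba Bb Bc. generalize (al mod 2)%Z (be mod 2)%Z (ga mod 2)%Z. intros s1 s2 s3 E' Ba Bb Bc.
    assert (s1 = 0 \/ s1 = 1)%Z as [->| ->] by lia; assert (s2 = 0 \/ s2 = 1)%Z as [->| ->] by lia;
    assert (s3 = 0 \/ s3 = 1)%Z as [->| ->] by lia; unfold comb;
    try (exfalso; apply Hw0; rewrite E'; vdes; apply V3_ext; simpl; ring);
    inL.
Qed.

Definition L12 (b c d : V3) : list V3 :=
  [:: b; c; d; vadd b d; vadd c d; vadd b (vadd c d);
      vopp b; vopp c; vopp d; vopp (vadd b d); vopp (vadd c d);
      vopp (vadd b (vadd c d))].

Lemma zero_bc b1 b2 b3 a b c d : det3 b1 b2 b3 <> 0 -> SB4 b1 b2 b3 a b c d -> O6 a b c d ->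
  dot b c = 0 -> voronoi_type_V1 b1 b2 b3 -> False.
Proof.
  intros Hd HS HO Hbc [s [Hnd [Hlen Hs]]].
  assert (F := SB4_facts _ _ _ _ _ _ _ Hd HS).
  destruct F as [_ [Hb0 [Hc0 _]]].
  destruct HS as [HL Ha].
  assert (Lb : in_lattice b1 b2 b3 b) by (apply HL; apply lat_b).
  assert (Lc : in_lattice b1 b2 b3 c) by (apply HL; apply lat_c).
  assert (N1 : ~ facet_vector b1 b2 b3 (vadd b c)).
  { intro Hf. assert (Hl : dot (vadd (vadd b c) (vscale 2 (vopp c))) (vadd (vadd b c) (vscale 2 (vopp c))) <= dot (vadd b c) (vadd b c)).
    { rewrite !dotDl !dotDr !dotZl !dotZr !dotNl !dotNr (dotC c b). lra. }
    destruct (facet_short _ _ _ _ _ Hf (lat_opp _ _ _ _ Lc) Hl) as [E|E].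
    - apply Hc0. vdes. injection E; intros. apply V3_ext; simpl; lra.
    - apply Hb0. vdes. injection E; intros. apply V3_ext; simpl; lra. }
  assert (N2 : ~ facet_vector b1 b2 b3 (vopp (vadd b c))).
  { intro Hf. assert (Hl : dot (vadd (vopp (vadd b c)) (vscale 2 b)) (vadd (vopp (vadd b c)) (vscale 2 b)) <= dot (vopp (vadd b c)) (vopp (vadd b c))).
    { rewrite !dotDl !dotDr !dotZl !dotZr !dotNl !dotNr !dotDl !dotDr (dotC c b). lra. }
    destruct (facet_short _ _ _ _ _ Hf Lb Hl) as [E|E].
    - apply Hb0. vdes. injection E; intros. apply V3_ext; simpl; lra.
    - apply Hc0. vdes. injection E; intros. apply V3_ext; simpl; lra. }
  assert (Inc : incl s (L12 b c d)).
  { intros w Hw. assert (Hf := proj2 (Hs w) Hw).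
    assert (HI := facet_L14 _ _ _ _ _ _ _ _ (conj HL Ha) HO Hf).
    unfold L14 in HI. simpl In in HI. unfold L12. simpl In.
    repeat (destruct HI as [E|HI]; [subst w; tauto|]). destruct HI. }
  assert (Hle := NoDup_incl_length Hnd Inc). rewrite Hlen in Hle. simpl in Hle. lia.
Qed.

Lemma O6_sw01 a b c d : O6 a b c d -> O6 b a c d.
Proof. unfold O6. rewrite (dotC b a). tauto. Qed.
Lemma O6_sw12 a b c d : O6 a b c d -> O6 a c b d.
Proof. unfold O6. rewrite (dotC c b). tauto. Qed.
Lemma O6_sw23 a b c d : O6 a b c d -> O6 a b d c.
Proof. unfold O6. rewrite (dotC d c). tauto. Qed.

Definition P6 (a b c d : V3) : Prop :=
  0 < - dot a b /\ 0 < - dot a c /\ 0 < - dot a d /\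
  0 < - dot b c /\ 0 < - dot b d /\ 0 < - dot c d.

Lemma all_pos b1 b2 b3 a b c d : det3 b1 b2 b3 <> 0 -> SB4 b1 b2 b3 a b c d -> O6 a b c d ->
  voronoi_type_V1 b1 b2 b3 -> P6 a b c d.
Proof.
  intros Hd HS HO HV.
  assert (G : forall x y, 0 <= - dot x y -> (dot x y = 0 -> False) -> 0 < - dot x y).
  { intros x y H1 H2. destruct (Req_dec (dot x y) 0) as [E|E]; [exfalso; auto| lra]. }
  destruct HO as [H1 [H2 [H3 [H4 [H5 H6]]]]].
  assert (HO : O6 a b c d) by (repeat split; assumption).
  repeat split; apply G; auto; intro E.
  - eapply (zero_bc _ _ _ c a b d Hd); eauto.
    + apply SB4_sw12, SB4_sw01, SB4_sw12, SB4_sw01, HS.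
    + apply O6_sw12, O6_sw01, O6_sw12, O6_sw01, HO.
  - eapply (zero_bc _ _ _ b a c d Hd); eauto.
    + apply SB4_sw01, HS.
    + apply O6_sw01, HO.
  - eapply (zero_bc _ _ _ b a d c Hd); eauto.
    + apply SB4_sw23, SB4_sw01, HS.
    + apply O6_sw23, O6_sw01, HO.
  - eapply (zero_bc _ _ _ a b c d Hd); eauto.
  - eapply (zero_bc _ _ _ a b d c Hd); eauto.
    + apply SB4_sw23, HS.
    + apply O6_sw23, HO.
  - eapply (zero_bc _ _ _ a c d b Hd); eauto.
    + apply SB4_sw23, SB4_sw12, HS.
    + apply O6_sw23, O6_sw12, HO.
Qed.

Definition fsum (a b c d : V3) := dot a a + dot b b + dot c c + dot d d.

Lemma dot_self_ge0 u : 0 <= dot u u.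
Proof. destruct u as [u1 u2 u3]; unfold dot; simpl.
  assert (0 <= u1*u1) by apply Rle_0_sqr.
  assert (0 <= u2*u2) by apply Rle_0_sqr.
  assert (0 <= u3*u3) by apply Rle_0_sqr. lra. Qed.

Lemma lat_by (x y z u v : V3) : u = v -> in_lattice x y z v -> in_lattice x y z u.
Proof. intros ->; auto. Qed.

Lemma selling b1 b2 b3 a b c d : SB4 b1 b2 b3 a b c d ->
  SB4 b1 b2 b3 (vopp a) b (vadd c a) (vadd d a) /\
  fsum (vopp a) b (vadd c a) (vadd d a) = fsum a b c d - 2 * dot a b.
Proof.
  intros [HL Ha]. split; [split|].
  - intro w. rewrite HL. apply lat_eq.
    + apply lat_b.
    + assert (vadd c a = vopp (vadd b d)) as -> by (subst a; vdes; apply V3_ext; simpl; ring).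
      apply lat_opp, lat_add; [apply lat_b|apply lat_d].
    + assert (vadd d a = vopp (vadd b c)) as -> by (subst a; vdes; apply V3_ext; simpl; ring).
      apply lat_opp, lat_add; [apply lat_b|apply lat_c].
    + apply lat_b.
    + apply (lat_by _ _ _ _ (vopp (vadd b (vadd d a)))); [subst a; vdes; apply V3_ext; simpl; ring|].
      apply lat_opp, lat_add; [apply lat_b|apply lat_d].
    + apply (lat_by _ _ _ _ (vopp (vadd b (vadd c a)))); [subst a; vdes; apply V3_ext; simpl; ring|].
      apply lat_opp, lat_add; [apply lat_b|apply lat_c].
  - subst a; vdes; apply V3_ext; simpl; ring.
  - unfold fsum. subst a; vdes; ring.
Qed.

Lemma list_min (A : Type) (P : A -> Prop) (g : A -> R) (l : list A) :
  (exists x, In x l /\ P x) -> exists m, In m l /\ P m /\ forall y, In y l -> P y -> g m <= g y.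
Proof.
  induction l as [|a l IH]; intros [x [Hx Px]].
  - destruct Hx.
  - destruct (classic (exists x, In x l /\ P x)) as [Hex|Hnex].
    + destruct (IH Hex) as [m [Hm [Pm Hmin]]].
      destruct (classic (P a /\ g a < g m)) as [[Pa Hlt]|Hn].
      * exists a. split; [left; reflexivity|]. split; auto.
        intros y Hy Py; destruct Hy as [Ey|Hy]; [subst y|]; [lra|]. specialize (Hmin y Hy Py). lra.
      * exists m. split; [right; exact Hm|]. split; auto.
        intros y Hy Py; destruct Hy as [Ey|Hy].
        -- subst y. destruct (Rlt_le_dec (g a) (g m)); auto. exfalso; apply Hn; auto.
        -- auto.
    + assert (Pa : P a).
      { destruct Hx as [<-|Hx]; auto. exfalso; apply Hnex; eauto. }
      exists a. split; [left; reflexivity|]. split; auto.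
      intros y Hy Py; destruct Hy as [Ey|Hy]; [subst y|]; [lra|]. exfalso; apply Hnex; eauto.
Qed.

Lemma coef_bound b1 b2 b3 (al be ga : Z) (C : R) :
  det3 b1 b2 b3 <> 0 ->
  let x := comb b1 b2 b3 (IZR al) (IZR be) (IZR ga) in
  dot x x <= C ->
  let M := dot (cross b2 b3) (cross b2 b3) + dot (cross b3 b1) (cross b3 b1) + dot (cross b1 b2) (cross b1 b2) in
  IZR al * IZR al <= C * M / (det3 b1 b2 b3 * det3 b1 b2 b3) /\
  IZR be * IZR be <= C * M / (det3 b1 b2 b3 * det3 b1 b2 b3) /\
  IZR ga * IZR ga <= C * M / (det3 b1 b2 b3 * det3 b1 b2 b3).
Proof.
  intros Hd x Hx M.
  set (D := det3 b1 b2 b3) in *.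
  assert (E1 : IZR al * D = dot x (cross b2 b3)) by (unfold x, D, comb; vdes; ring).
  assert (E2 : IZR be * D = dot x (cross b3 b1)) by (unfold x, D, comb; vdes; ring).
  assert (E3 : IZR ga * D = dot x (cross b1 b2)) by (unfold x, D, comb; vdes; ring).
  assert (C1 := cs x (cross b2 b3)). assert (C2 := cs x (cross b3 b1)). assert (C3 := cs x (cross b1 b2)).
  rewrite -E1 in C1. rewrite -E2 in C2. rewrite -E3 in C3.
  assert (G1 := dot_self_ge0 (cross b2 b3)). assert (G2 := dot_self_ge0 (cross b3 b1)).
  assert (G3 := dot_self_ge0 (cross b1 b2)). assert (Gx := dot_self_ge0 x).
  assert (HD : 0 < D * D) by (apply Rsqr_pos_lt; exact Hd).
  assert (HM : dot x x * M <= C * M) by (apply Rmult_le_compat_r; unfold M; lra).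
  unfold M in HM.
  assert (EM : C * M / (D * D) * (D * D) = C * M) by (field; exact Hd).
  assert (P1 := Rmult_le_pos _ _ Gx G1). assert (P2 := Rmult_le_pos _ _ Gx G2).
  assert (P3 := Rmult_le_pos _ _ Gx G3).
  assert (Q1 : (IZR al * D) ^ 2 = IZR al * IZR al * (D * D)) by ring.
  assert (Q2 : (IZR be * D) ^ 2 = IZR be * IZR be * (D * D)) by ring.
  assert (Q3 : (IZR ga * D) ^ 2 = IZR ga * IZR ga * (D * D)) by ring.
  unfold M in EM.
  repeat split; apply (Rmult_le_reg_r (D * D)); auto; unfold M; rewrite EM; lra.
Qed.

Definition ZL (K : Z) : list Z := List.map (fun n => (Z.of_nat n - K)%Z) (List.seq 0 (Z.to_nat (2*K))).

Lemma in_ZL K al : (- K < al < K)%Z -> In al (ZL K).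
Proof.
  intro H. unfold ZL. apply in_map_iff. exists (Z.to_nat (al + K)). split.
  - rewrite Z2Nat.id; lia.
  - apply in_seq. lia.
Qed.

Lemma exists_min b1 b2 b3 : det3 b1 b2 b3 <> 0 -> exists a b c d, SB4 b1 b2 b3 a b c d /\
  forall a' b' c' d', SB4 b1 b2 b3 a' b' c' d' -> fsum a b c d <= fsum a' b' c' d'.
Proof.
  intro Hd.
  set (a0 := vopp (vadd b1 (vadd b2 b3))).
  assert (H0 : SB4 b1 b2 b3 a0 b1 b2 b3) by (split; [intro; tauto| reflexivity]).
  set (C := fsum a0 b1 b2 b3).
  set (M := dot (cross b2 b3) (cross b2 b3) + dot (cross b3 b1) (cross b3 b1) + dot (cross b1 b2) (cross b1 b2)).
  set (B := C * M / (det3 b1 b2 b3 * det3 b1 b2 b3)).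
  set (K := up B).
  assert (HK : IZR K > B) by (apply archimed).
  set (VL := List.map (fun t => comb b1 b2 b3 (IZR (fst (fst t))) (IZR (snd (fst t))) (IZR (snd t)))
                (list_prod (list_prod (ZL K) (ZL K)) (ZL K))).
  assert (Hbound : forall v, in_lattice b1 b2 b3 v -> dot v v <= C -> In v VL).
  { intros v [al [be [ga Ev]]] Hv. fold (comb b1 b2 b3) in Ev. subst v.
    destruct (coef_bound _ _ _ al be ga C Hd Hv) as [Q1 [Q2 Q3]]. fold M B in Q1, Q2, Q3.
    assert (Z1 : (al * al < K)%Z) by (apply lt_IZR; rewrite mult_IZR; lra).
    assert (Z2 : (be * be < K)%Z) by (apply lt_IZR; rewrite mult_IZR; lra).
    assert (Z3 : (ga * ga < K)%Z) by (apply lt_IZR; rewrite mult_IZR; lra).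
    unfold VL. apply in_map_iff. exists ((al, be), ga). split; [reflexivity|].
    apply in_prod; [apply in_prod|]; apply in_ZL; nia. }
  set (TL := list_prod (list_prod VL VL) VL).
  set (P := fun t : V3 * V3 * V3 => SB4 b1 b2 b3 (vopp (vadd (fst (fst t)) (vadd (snd (fst t)) (snd t)))) (fst (fst t)) (snd (fst t)) (snd t)).
  set (g := fun t : V3 * V3 * V3 => fsum (vopp (vadd (fst (fst t)) (vadd (snd (fst t)) (snd t)))) (fst (fst t)) (snd (fst t)) (snd t)).
  assert (Hin : forall a b c d, SB4 b1 b2 b3 a b c d -> fsum a b c d <= C ->
            In ((b, c), d) TL /\ P ((b, c), d) /\ g ((b, c), d) = fsum a b c d).
  { intros a b c d HS Hf. assert (HS' := HS). destruct HS' as [HL Ha].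
    assert (Ga := dot_self_ge0 a). assert (Gb := dot_self_ge0 b).
    assert (Gc := dot_self_ge0 c). assert (Gd := dot_self_ge0 d). unfold fsum in Hf.
    split; [|split].
    - apply in_prod; [apply in_prod|]; apply Hbound; try lra.
      + apply HL, lat_b.
      + apply HL, lat_c.
      + apply HL, lat_d.
    - unfold P; simpl. rewrite -Ha. exact HS.
    - unfold g; simpl. rewrite -Ha. reflexivity. }
  destruct (Hin _ _ _ _ H0 (Rle_refl _)) as [I0 [P0 g0]].
  destruct (list_min _ P g TL (ex_intro _ _ (conj I0 P0))) as [m [Im [Pm Hmin]]].
  exists (vopp (vadd (fst (fst m)) (vadd (snd (fst m)) (snd m)))), (fst (fst m)), (snd (fst m)), (snd m).
  split; [exact Pm|].
  intros a' b' c' d' HS'. fold (g m).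
  destruct (Rle_lt_dec (fsum a' b' c' d') C) as [Hle|Hlt].
  - destruct (Hin _ _ _ _ HS' Hle) as [I1 [P1 g1]]. rewrite -g1. apply Hmin; auto.
  - assert (g m <= g ((b1, b2), b3)) by (apply Hmin; auto). fold C in g0. lra.
Qed.

Lemma min_obt_ab b1 b2 b3 a b c d : SB4 b1 b2 b3 a b c d ->
  (forall a' b' c' d', SB4 b1 b2 b3 a' b' c' d' -> fsum a b c d <= fsum a' b' c' d') ->
  0 <= - dot a b.
Proof.
  intros HS Hmin. destruct (selling _ _ _ _ _ _ _ HS) as [HS' Hf].
  specialize (Hmin _ _ _ _ HS'). lra.
Qed.

Lemma min_obtuse b1 b2 b3 a b c d : SB4 b1 b2 b3 a b c d ->
  (forall a' b' c' d', SB4 b1 b2 b3 a' b' c' d' -> fsum a b c d <= fsum a' b' c' d') ->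
  O6 a b c d.
Proof.
  intros HS Hmin.
  assert (Hm : forall x y z t, fsum x y z t = fsum a b c d ->
     forall a' b' c' d', SB4 b1 b2 b3 a' b' c' d' -> fsum x y z t <= fsum a' b' c' d').
  { intros x y z t E a' b' c' d' H. rewrite E. auto. }
  unfold O6. repeat split.
  - eapply min_obt_ab; eauto.
  - eapply (min_obt_ab _ _ _ a c b d); [apply SB4_sw12, HS| apply Hm; unfold fsum; ring].
  - eapply (min_obt_ab _ _ _ a d b c); [apply SB4_sw12, SB4_sw23, HS| apply Hm; unfold fsum; ring].
  - eapply (min_obt_ab _ _ _ b c a d); [apply SB4_sw12, SB4_sw01, HS| apply Hm; unfold fsum; ring].
  - eapply (min_obt_ab _ _ _ b d a c); [apply SB4_sw12, SB4_sw23, SB4_sw01, HS| apply Hm; unfold fsum; ring].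
  - eapply (min_obt_ab _ _ _ c d a b); [apply SB4_sw12, SB4_sw23, SB4_sw01, SB4_sw12, HS| apply Hm; unfold fsum; ring].
Qed.

Definition Qr (p q r : R) := p*p + q*q + r*r + (p+q+r)*(p+q+r).
Definition Qf (p q r : Z) : Z := (p*p + q*q + r*r + (p+q+r)*(p+q+r))%Z.

Lemma Qf_IZR p q r : IZR (Qf p q r) = Qr (IZR p) (IZR q) (IZR r).
Proof. unfold Qf, Qr. rewrite !plus_IZR !mult_IZR !plus_IZR. reflexivity. Qed.

Lemma Qf_ge2 p q r : ~ (p = 0 /\ q = 0 /\ r = 0)%Z -> (2 <= Qf p q r)%Z.
Proof.
  intro H. unfold Qf.
  set (X := (p*p + q*q + r*r + p*q + p*r + q*r)%Z).
  assert (E : (p*p + q*q + r*r + (p+q+r)*(p+q+r) = 2 * X)%Z) by (unfold X; ring).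
  assert (E2 : (2 * X = (p+q)*(p+q) + (p+r)*(p+r) + (q+r)*(q+r))%Z) by (unfold X; ring).
  rewrite E.
  assert (S0 : forall t : Z, (0 <= t*t)%Z) by (intro; nia).
  assert (S1 : forall t : Z, t <> 0%Z -> (1 <= t*t)%Z) by (intros; nia).
  pose proof (S0 (p+q)%Z); pose proof (S0 (p+r)%Z); pose proof (S0 (q+r)%Z).
  destruct (Z.eq_dec (p+q) 0); destruct (Z.eq_dec (p+r) 0); destruct (Z.eq_dec (q+r) 0);
  try (exfalso; apply H; lia);
  repeat match goal with h : (?t <> 0)%Z |- _ => pose proof (S1 t h); clear h end;
  lia.
Qed.

Lemma Qf2_bound p q r : Qf p q r = 2%Z -> (-1 <= p <= 1 /\ -1 <= q <= 1 /\ -1 <= r <= 1)%Z.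
Proof.
  unfold Qf. intro H.
  assert (S0 : forall t : Z, (0 <= t*t)%Z) by (intro; nia).
  pose proof (S0 p); pose proof (S0 q); pose proof (S0 r); pose proof (S0 (p+q+r)%Z).
  assert (p*p <= 2)%Z by lia. assert (q*q <= 2)%Z by lia. assert (r*r <= 2)%Z by lia.
  repeat split; nia.
Qed.

Lemma sum_formula a b c d x1 y1 z1 x2 y2 z2 x3 y3 z3 : a = vopp (vadd b (vadd c d)) ->
  fsum (vopp (vadd (comb b c d x1 y1 z1) (vadd (comb b c d x2 y2 z2) (comb b c d x3 y3 z3))))
       (comb b c d x1 y1 z1) (comb b c d x2 y2 z2) (comb b c d x3 y3 z3) =
  (- dot a b) * Qr x1 x2 x3 + (- dot a c) * Qr y1 y2 y3 + (- dot a d) * Qr z1 z2 z3 +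
  (- dot b c) * Qr (x1-y1) (x2-y2) (x3-y3) + (- dot b d) * Qr (x1-z1) (x2-z2) (x3-z3) +
  (- dot c d) * Qr (y1-z1) (y2-z2) (y3-z3).
Proof. intros ->. unfold fsum, comb, Qr. vdes. ring. Qed.

Lemma fsum_formula a b c d : a = vopp (vadd b (vadd c d)) ->
  fsum a b c d = 2 * ((- dot a b) + (- dot a c) + (- dot a d) + (- dot b c) + (- dot b d) + (- dot c d)).
Proof. intros ->. unfold fsum. vdes. ring. Qed.

Definition isPos (x y z : Z) : bool :=
  ((Z.eqb (x) (-1)) && (Z.eqb (y) (-1)) && (Z.eqb (z) (-1))) || ((Z.eqb (x) (1)) && (Z.eqb (y) (0)) && (Z.eqb (z) (0))) ||
  ((Z.eqb (x) (0)) && (Z.eqb (y) (1)) && (Z.eqb (z) (0))) || ((Z.eqb (x) (0)) && (Z.eqb (y) (0)) && (Z.eqb (z) (1))).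
Definition isNeg (x y z : Z) : bool := isPos (-x)%Z (-y)%Z (-z)%Z.

Definition condb (x1 y1 z1 x2 y2 z2 x3 y3 z3 : Z) : bool :=
  ((Z.eqb (Qf x1 x2 x3) (2)) && (Z.eqb (Qf y1 y2 y3) (2)) && (Z.eqb (Qf z1 z2 z3) (2)) &&
  Z.eqb (Qf (x1-y1) (x2-y2) (x3-y3)) 2 && Z.eqb (Qf (x1-z1) (x2-z2) (x3-z3)) 2 &&
  Z.eqb (Qf (y1-z1) (y2-z2) (y3-z3)) 2)%Z.

Definition conclb (x1 y1 z1 x2 y2 z2 x3 y3 z3 : Z) : bool :=
  (isPos (-(x1+x2+x3))%Z (-(y1+y2+y3))%Z (-(z1+z2+z3))%Z && isPos x1 y1 z1 && isPos x2 y2 z2 && isPos x3 y3 z3) ||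
  (isNeg (-(x1+x2+x3))%Z (-(y1+y2+y3))%Z (-(z1+z2+z3))%Z && isNeg x1 y1 z1 && isNeg x2 y2 z2 && isNeg x3 y3 z3).

Definition vals : list Z := [:: (-1)%Z; 0%Z; 1%Z].

Definition allchk : bool :=
  forallb (fun x1 => forallb (fun y1 => forallb (fun z1 =>
  forallb (fun x2 => forallb (fun y2 => forallb (fun z2 =>
  forallb (fun x3 => forallb (fun y3 => forallb (fun z3 =>
    implb (condb x1 y1 z1 x2 y2 z2 x3 y3 z3) (conclb x1 y1 z1 x2 y2 z2 x3 y3 z3)
  ) vals) vals) vals) vals) vals) vals) vals) vals) vals.

Lemma allchk_true : allchk = true.
Proof. vm_compute. reflexivity. Qed.

Lemma in_vals x : (-1 <= x <= 1)%Z -> In x vals.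
Proof. intro H. assert (x = -1 \/ x = 0 \/ x = 1)%Z as [->|[->| ->]] by lia; simpl; tauto. Qed.

Lemma chk_spec x1 y1 z1 x2 y2 z2 x3 y3 z3 :
  (-1 <= x1 <= 1)%Z -> (-1 <= y1 <= 1)%Z -> (-1 <= z1 <= 1)%Z ->
  (-1 <= x2 <= 1)%Z -> (-1 <= y2 <= 1)%Z -> (-1 <= z2 <= 1)%Z ->
  (-1 <= x3 <= 1)%Z -> (-1 <= y3 <= 1)%Z -> (-1 <= z3 <= 1)%Z ->
  condb x1 y1 z1 x2 y2 z2 x3 y3 z3 = true -> conclb x1 y1 z1 x2 y2 z2 x3 y3 z3 = true.
Proof.
  intros B1 B2 B3 B4 B5 B6 B7 B8 B9 Hc. assert (HH := allchk_true). unfold allchk in HH.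
  rewrite forallb_forall in HH.
  specialize (HH x1 (in_vals _ B1)). rewrite forallb_forall in HH.
  specialize (HH y1 (in_vals _ B2)). rewrite forallb_forall in HH.
  specialize (HH z1 (in_vals _ B3)). rewrite forallb_forall in HH.
  specialize (HH x2 (in_vals _ B4)). rewrite forallb_forall in HH.
  specialize (HH y2 (in_vals _ B5)). rewrite forallb_forall in HH.
  specialize (HH z2 (in_vals _ B6)). rewrite forallb_forall in HH.
  specialize (HH x3 (in_vals _ B7)). rewrite forallb_forall in HH.
  specialize (HH y3 (in_vals _ B8)). rewrite forallb_forall in HH.
  specialize (HH z3 (in_vals _ B9)).
  rewrite Hc in HH.
  exact HH.
Qed.

Ltac inL4 := simpl In;
  repeat (first [ left; vdes; apply V3_ext; simpl; ring | right ]).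

Lemma pos_in a b c d x y z : a = vopp (vadd b (vadd c d)) -> isPos x y z = true ->
  In (comb b c d (IZR x) (IZR y) (IZR z)) [:: a; b; c; d].
Proof.
  intros Ha H. subst a. unfold isPos in H.
  rewrite !orb_true_iff !andb_true_iff !Z.eqb_eq in H.
  decompose [or and] H; subst; unfold comb; inL4.
Qed.

Lemma neg_in a b c d x y z : a = vopp (vadd b (vadd c d)) -> isNeg x y z = true ->
  In (comb b c d (IZR x) (IZR y) (IZR z)) [:: vopp a; vopp b; vopp c; vopp d].
Proof.
  intros Ha H. subst a. unfold isNeg, isPos in H.
  rewrite !orb_true_iff !andb_true_iff !Z.eqb_eq in H.
  decompose [or and] H;
  repeat match goal with h : (- ?v)%Z = ?k |- _ => assert (v = - k)%Z by lia; clear h end;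
  subst; unfold comb; inL4.
Qed.

Lemma comb_sum b c d x1 y1 z1 x2 y2 z2 x3 y3 z3 :
  vopp (vadd (comb b c d (IZR x1) (IZR y1) (IZR z1)) (vadd (comb b c d (IZR x2) (IZR y2) (IZR z2)) (comb b c d (IZR x3) (IZR y3) (IZR z3)))) =
  comb b c d (IZR (-(x1+x2+x3))) (IZR (-(y1+y2+y3))) (IZR (-(z1+z2+z3))).
Proof. rewrite !opp_IZR !plus_IZR. unfold comb. vdes. apply V3_ext; simpl; ring. Qed.

Lemma le_sub0 x y : x <= y -> 0 <= y - x.
Proof. intro; lra. Qed.

Lemma compare b1 b2 b3 a b c d a' b' c' d' : det3 b1 b2 b3 <> 0 ->
  SB4 b1 b2 b3 a b c d -> P6 a b c d -> SB4 b1 b2 b3 a' b' c' d' ->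
  fsum a b c d <= fsum a' b' c' d' /\
  (fsum a' b' c' d' = fsum a b c d ->
     (forall x, In x [:: a'; b'; c'; d'] -> In x [:: a; b; c; d]) \/
     (forall x, In x [:: a'; b'; c'; d'] -> In x [:: vopp a; vopp b; vopp c; vopp d])).
Proof.
  intros Hd HS HP HS'.
  assert (Hd' := SB4_det _ _ _ _ _ _ _ Hd HS').
  destruct HS as [HL Ha]. destruct HS' as [HL' Ha'].
  destruct (proj1 (HL b') (proj2 (HL' b') (lat_b _ _ _))) as [x1 [y1 [z1 Eb]]].
  destruct (proj1 (HL c') (proj2 (HL' c') (lat_c _ _ _))) as [x2 [y2 [z2 Ec]]].
  destruct (proj1 (HL d') (proj2 (HL' d') (lat_d _ _ _))) as [x3 [y3 [z3 Ed]]].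
  fold (comb b c d) in Eb, Ec, Ed.
  rewrite Eb Ec Ed det3_comb in Hd'.
  set (DM := IZR x1 * (IZR y2 * IZR z3 - IZR z2 * IZR y3) - IZR y1 * (IZR x2 * IZR z3 - IZR z2 * IZR x3) +
       IZR z1 * (IZR x2 * IZR y3 - IZR y2 * IZR x3)) in Hd'.
  assert (HDM : DM <> 0) by (intro E; apply Hd'; rewrite E; ring).
  assert (N1 : ~ (x1 = 0 /\ x2 = 0 /\ x3 = 0)%Z) by (intros [-> [-> ->]]; apply HDM; unfold DM; ring).
  assert (N2 : ~ (y1 = 0 /\ y2 = 0 /\ y3 = 0)%Z) by (intros [-> [-> ->]]; apply HDM; unfold DM; ring).
  assert (N3 : ~ (z1 = 0 /\ z2 = 0 /\ z3 = 0)%Z) by (intros [-> [-> ->]]; apply HDM; unfold DM; ring).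
  assert (N4 : ~ (x1 - y1 = 0 /\ x2 - y2 = 0 /\ x3 - y3 = 0)%Z).
  { intros [E1 [E2 E3]]. assert (x1 = y1)%Z as -> by lia. assert (x2 = y2)%Z as -> by lia.
    assert (x3 = y3)%Z as -> by lia. apply HDM; unfold DM; ring. }
  assert (N5 : ~ (x1 - z1 = 0 /\ x2 - z2 = 0 /\ x3 - z3 = 0)%Z).
  { intros [E1 [E2 E3]]. assert (x1 = z1)%Z as -> by lia. assert (x2 = z2)%Z as -> by lia.
    assert (x3 = z3)%Z as -> by lia. apply HDM; unfold DM; ring. }
  assert (N6 : ~ (y1 - z1 = 0 /\ y2 - z2 = 0 /\ y3 - z3 = 0)%Z).
  { intros [E1 [E2 E3]]. assert (y1 = z1)%Z as -> by lia. assert (y2 = z2)%Z as -> by lia.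
    assert (y3 = z3)%Z as -> by lia. apply HDM; unfold DM; ring. }
  assert (F' : fsum a' b' c' d' =
    (- dot a b) * IZR (Qf x1 x2 x3) + (- dot a c) * IZR (Qf y1 y2 y3) + (- dot a d) * IZR (Qf z1 z2 z3) +
    (- dot b c) * IZR (Qf (x1-y1) (x2-y2) (x3-y3)) + (- dot b d) * IZR (Qf (x1-z1) (x2-z2) (x3-z3)) +
    (- dot c d) * IZR (Qf (y1-z1) (y2-z2) (y3-z3))).
  { rewrite Ha' Eb Ec Ed (sum_formula a) // !Qf_IZR !minus_IZR. reflexivity. }
  assert (F := fsum_formula _ _ _ _ Ha).
  assert (G1 := IZR_le _ _ (Qf_ge2 _ _ _ N1)).
  assert (G2 := IZR_le _ _ (Qf_ge2 _ _ _ N2)).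
  assert (G3 := IZR_le _ _ (Qf_ge2 _ _ _ N3)).
  assert (G4 := IZR_le _ _ (Qf_ge2 _ _ _ N4)).
  assert (G5 := IZR_le _ _ (Qf_ge2 _ _ _ N5)).
  assert (G6 := IZR_le _ _ (Qf_ge2 _ _ _ N6)).
  destruct HP as [P1 [P2 [P3 [P4 [P5 P6]]]]].
  assert (T1 := Rmult_le_pos _ _ (Rlt_le _ _ P1) (le_sub0 _ _ G1)).
  assert (T2 := Rmult_le_pos _ _ (Rlt_le _ _ P2) (le_sub0 _ _ G2)).
  assert (T3 := Rmult_le_pos _ _ (Rlt_le _ _ P3) (le_sub0 _ _ G3)).
  assert (T4 := Rmult_le_pos _ _ (Rlt_le _ _ P4) (le_sub0 _ _ G4)).
  assert (T5 := Rmult_le_pos _ _ (Rlt_le _ _ P5) (le_sub0 _ _ G5)).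
  assert (T6 := Rmult_le_pos _ _ (Rlt_le _ _ P6) (le_sub0 _ _ G6)).
  split.
  - rewrite F' F. lra.
  - intro Heq.
    assert (Z0 : forall p q, 0 < p -> 0 <= p * (q - IZR 2) -> p * (q - IZR 2) = 0 -> q = IZR 2).
    { intros p q Hp _ Hz. apply Rmult_integral in Hz. destruct Hz; lra. }
    assert (W1 : Qf x1 x2 x3 = 2%Z) by (apply eq_IZR; apply (Z0 _ _ P1 T1); lra).
    assert (W2 : Qf y1 y2 y3 = 2%Z) by (apply eq_IZR; apply (Z0 _ _ P2 T2); lra).
    assert (W3 : Qf z1 z2 z3 = 2%Z) by (apply eq_IZR; apply (Z0 _ _ P3 T3); lra).
    assert (W4 : Qf (x1-y1) (x2-y2) (x3-y3) = 2%Z) by (apply eq_IZR; apply (Z0 _ _ P4 T4); lra).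
    assert (W5 : Qf (x1-z1) (x2-z2) (x3-z3) = 2%Z) by (apply eq_IZR; apply (Z0 _ _ P5 T5); lra).
    assert (W6 : Qf (y1-z1) (y2-z2) (y3-z3) = 2%Z) by (apply eq_IZR; apply (Z0 _ _ P6 T6); lra).
    destruct (Qf2_bound _ _ _ W1) as [B1 [B2 B3]].
    destruct (Qf2_bound _ _ _ W2) as [B4 [B5 B6]].
    destruct (Qf2_bound _ _ _ W3) as [B7 [B8 B9]].
    assert (Hc : condb x1 y1 z1 x2 y2 z2 x3 y3 z3 = true).
    { unfold condb. rewrite W1 W2 W3 W4 W5 W6. reflexivity. }
    assert (Hcl := chk_spec _ _ _ _ _ _ _ _ _ B1 B4 B7 B2 B5 B8 B3 B6 B9 Hc).
    unfold conclb in Hcl. rewrite orb_true_iff !andb_true_iff in Hcl.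
    assert (Ea : a' = comb b c d (IZR (-(x1+x2+x3))) (IZR (-(y1+y2+y3))) (IZR (-(z1+z2+z3)))).
    { rewrite Ha' Eb Ec Ed. apply comb_sum. }
    destruct Hcl as [[[[K0 K1] K2] K3]|[[[K0 K1] K2] K3]]; [left|right];
    intros x Hx; simpl In in Hx; decompose [or] Hx; try subst x.
    + rewrite Ea. apply pos_in; auto.
    + rewrite Eb. apply pos_in; auto.
    + rewrite Ec. apply pos_in; auto.
    + rewrite Ed. apply pos_in; auto.
    + contradiction.
    + rewrite Ea. apply neg_in; auto.
    + rewrite Eb. apply neg_in; auto.
    + rewrite Ec. apply neg_in; auto.
    + rewrite Ed. apply neg_in; auto.
    + contradiction.
Qed.

Lemma ord4 (i : 'I_4) : i = i0 \/ i = i1 \/ i = i2 \/ i = i3.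
Proof.
  destruct i as [[|[|[|[|n]]]] Hi].
  - left; apply val_inj; reflexivity.
  - right; left; apply val_inj; reflexivity.
  - right; right; left; apply val_inj; reflexivity.
  - right; right; right; apply val_inj; reflexivity.
  - exfalso. discriminate Hi.
Qed.

Definition mk4 (a b c d : V3) : 'I_4 -> V3 :=
  fun i => match nat_of_ord i with 0 => a | 1 => b | 2 => c | _ => d end.

Lemma O6_obtuse v : O6 (v i0) (v i1) (v i2) (v i3) -> obtuse v.
Proof.
  intros [H1 [H2 [H3 [H4 [H5 H6]]]]] i j Hij. unfold conorm.
  destruct (ord4 i) as [-> | [-> | [-> | ->]]]; destruct (ord4 j) as [-> | [-> | [-> | ->]]];
  try (exfalso; revert Hij; vm_compute; discriminate);
  try assumption; rewrite dotC; assumption.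
Qed.

Lemma obtuse_O6 v : obtuse v -> O6 (v i0) (v i1) (v i2) (v i3).
Proof.
  intro H. unfold obtuse, conorm in H.
  repeat split; apply H; vm_compute; reflexivity.
Qed.

Lemma mk_reorder (v w : 'I_4 -> V3) : (forall i, exists j, w i = v j) ->
  (forall i j, w i = w j -> i = j) -> reordering v w.
Proof.
  intros H Hinj.
  pose f := fun i => proj1_sig (constructive_indefinite_description _ (H i)).
  assert (Hf : forall i, w i = v (f i)) by (intro i; exact (proj2_sig (constructive_indefinite_description _ (H i)))).
  assert (finj : injective f).
  { intros x y E. apply Hinj. rewrite (Hf x) (Hf y) E. reflexivity. }
  exists (perm finj). intro i. rewrite permE. apply Hf.
Qed.

Lemma w_inj b1 b2 b3 (w : 'I_4 -> V3) : det3 b1 b2 b3 <> 0 -> superbase b1 b2 b3 w ->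
  forall i j, w i = w j -> i = j.
Proof.
  intros Hd Hs.
  destruct (SB4_facts _ _ _ _ _ _ _ Hd Hs) as [_ [_ [_ [_ [F1 [F2 [F3 [F4 [F5 [F6 _]]]]]]]]]].
  intros i j E.
  destruct (ord4 i) as [-> | [-> | [-> | ->]]]; destruct (ord4 j) as [-> | [-> | [-> | ->]]];
  try reflexivity; exfalso;
  first [ exact (F1 E) | exact (F2 E) | exact (F3 E) | exact (F4 E) | exact (F5 E) | exact (F6 E)
        | exact (F1 (esym E)) | exact (F2 (esym E)) | exact (F3 (esym E))
        | exact (F4 (esym E)) | exact (F5 (esym E)) | exact (F6 (esym E)) ].
Qed.

Lemma in4_ex (x : V3) (v : 'I_4 -> V3) : In x [:: v i0; v i1; v i2; v i3] -> exists j, x = v j.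
Proof.
  simpl In. intro H. decompose [or] H.
  - exists i0; auto.
  - exists i1; auto.
  - exists i2; auto.
  - exists i3; auto.
  - contradiction.
Qed.

Lemma in4_w (w : 'I_4 -> V3) i : In (w i) [:: w i0; w i1; w i2; w i3].
Proof. simpl In. destruct (ord4 i) as [-> | [-> | [-> | ->]]]; tauto. Qed.

Lemma uniq_part b1 b2 b3 v : det3 b1 b2 b3 <> 0 -> voronoi_type_V1 b1 b2 b3 ->
  obtuse_superbase b1 b2 b3 v ->
  obtuse_superbase b1 b2 b3 (neg_sb v) /\ ~ reordering v (neg_sb v) /\
  forall w, obtuse_superbase b1 b2 b3 w -> reordering v w \/ reordering (neg_sb v) w.
Proof.
  intros Hd HV [Hs Ho].
  assert (HS : SB4 b1 b2 b3 (v i0) (v i1) (v i2) (v i3)) by exact Hs.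
  assert (HP := all_pos _ _ _ _ _ _ _ Hd HS (obtuse_O6 _ Ho) HV).
  split; [|split].
  - split.
    + exact (SB4_neg _ _ _ _ _ _ _ HS).
    + intros i j Hij. unfold conorm, neg_sb. rewrite dotNl dotNr Ropp_involutive. apply Ho; auto.
  - intros [s Hs'].
    destruct (SB4_facts _ _ _ _ _ _ _ Hd HS) as [Fa [_ [_ [_ [_ [_ [_ [_ [_ [_ [Fab [Fac [Fad _]]]]]]]]]]]]].
    assert (H := Hs' i0). unfold neg_sb in H.
    destruct (ord4 (s i0)) as [E | [E | [E | E]]]; rewrite E in H.
    + apply Fa. revert H. generalize (v i0). intros a H. vdes. injection H; intros; apply V3_ext; simpl; lra.
    + apply Fab. revert H. generalize (v i0) (v i1). intros a b H. vdes. injection H; intros; apply V3_ext; simpl; lra.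
    + apply Fac. revert H. generalize (v i0) (v i2). intros a b H. vdes. injection H; intros; apply V3_ext; simpl; lra.
    + apply Fad. revert H. generalize (v i0) (v i3). intros a b H. vdes. injection H; intros; apply V3_ext; simpl; lra.
  - intros w [Hw Hwo].
    assert (HW : SB4 b1 b2 b3 (w i0) (w i1) (w i2) (w i3)) by exact Hw.
    assert (HPw := all_pos _ _ _ _ _ _ _ Hd HW (obtuse_O6 _ Hwo) HV).
    destruct (compare _ _ _ _ _ _ _ _ _ _ _ Hd HS HP HW) as [C1 C2].
    destruct (compare _ _ _ _ _ _ _ _ _ _ _ Hd HW HPw HS) as [C3 _].
    assert (Winj := w_inj _ _ _ _ Hd Hw).
    destruct (C2 (Rle_antisym _ _ C3 C1)) as [K|K]; [left|right]; apply mk_reorder; auto;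
      intro i; apply in4_ex; apply K; apply in4_w.
Qed.

Theorem lemma4p1 (b1 b2 b3 : V3) :
  det3 b1 b2 b3 <> 0 ->
  voronoi_type_V1 b1 b2 b3 ->
  (* (a) exactly two obtuse superbases up to reordering, related by v |-> -v *)
  ((exists v, obtuse_superbase b1 b2 b3 v) /\
   forall v, obtuse_superbase b1 b2 b3 v ->
     obtuse_superbase b1 b2 b3 (neg_sb v) /\
     ~ reordering v (neg_sb v) /\
     forall w, obtuse_superbase b1 b2 b3 w ->
       reordering v w \/ reordering (neg_sb v) w) /\
  (* (b) coforms of any two obtuse superbases related by an index permutation *)
  (forall v w, obtuse_superbase b1 b2 b3 v -> obtuse_superbase b1 b2 b3 w ->
     exists s : {perm 'I_4}, forall i j : 'I_4, i != j ->
       conorm w i j = conorm v (s i) (s j)).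
Proof.
  intros Hd HV. split; [split|].
  - destruct (exists_min _ _ _ Hd) as [a [b [c [d [HS Hmin]]]]].
    assert (HO := min_obtuse _ _ _ _ _ _ _ HS Hmin).
    exists (mk4 a b c d). split.
    + exact HS.
    + apply O6_obtuse. exact HO.
  - intros v Hv. exact (uniq_part _ _ _ _ Hd HV Hv).
  - intros v w Hv Hw.
    destruct (uniq_part _ _ _ _ Hd HV Hv) as [_ [_ U]].
    destruct (U w Hw) as [[s Hs]|[s Hs]]; exists s; intros i j _; unfold conorm; rewrite !Hs.
    + reflexivity.
    + unfold neg_sb. rewrite dotNl dotNr Ropp_involutive. reflexivity.
Qed.
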